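(* Let $k\ge 2$ and let $a_1,\dots,a_k$ be simple closed curves on an oriented surface such that $a_i$ and $a_{i+1}$ meet transversely in exactly one point and $a_i\cap a_j=\emptyset$ for $|i-j|\ge 2$. Write $a_i$ for the right-handed Dehn twist $t_{a_i}$, and put $b_i=t_{a_{i+1}}(a_i)$, $\bar b_i=t_{a_{i+1}}^{-1}(a_i)$ (curves, also standing for their Dehn twists). Then (a) $(a_{k-1}a_{k-2}\cdots a_2a_1)\cdot(a_ka_{k-1}\cdots a_2a_1)\sim a_k^{\,k}\cdot \bar b_{k-1}\cdots\bar b_2\bar b_1$; (b) $(a_1a_2\cdots a_{k-1}a_k)\cdot(a_1a_2\cdots a_{k-2}a_{k-1})\sim b_1b_2\cdots b_{k-1}\cdot a_k^{\,k}$.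
   Context: For a curve $x$ and mapping class $f$, $t_{f(x)}=f t_x f^{-1}$. Two words (finite sequences) of right-handed Dehn twists are related by $\sim$ if one is obtained from the other by a finite sequence of elementary transformations (Hurwitz moves): $\cdots t_{v}t_{w}\cdots \sim \cdots t_{t_v(w)}t_v\cdots$ and $\cdots t_vt_w\cdots\sim\cdots t_w t_{t_w^{-1}(v)}\cdots$. In particular equivalent words represent the same mapping class. *)

(* Defs.v *)
From Stdlib Require Import List Relations Arith.
Import ListNotations.

(* A type of curves C together with the action of right-handed Dehn twists on
   curves: tw v w = t_v(w), twinv v w = t_v^{-1}(w). *)
Record TwistAction := {
  curve :> Type;
  tw : curve -> curve -> curve;
  twinv : curve -> curve -> curve;
  tw_twinv : forall v w, tw v (twinv v w) = w;
  twinv_tw : forall v w, twinv v (tw v w) = w;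
  tw_self : forall x, tw x x = x;
  (* t_{f(x)} = f t_x f^{-1} for f = t_v, as actions on curves *)
  tw_conj : forall v x z, tw (tw v x) z = tw v (tw x (twinv v z))
}.

(* One elementary transformation (Hurwitz move) on words of Dehn twists,
   a word being written as the list of its curves. *)
Inductive hurwitz_step (T : TwistAction) : list T -> list T -> Prop :=
| hs_right : forall (u u' : list T) (v w : T),
    hurwitz_step T (u ++ v :: w :: u') (u ++ tw T v w :: v :: u')
| hs_left : forall (u u' : list T) (v w : T),
    hurwitz_step T (u ++ v :: w :: u') (u ++ w :: twinv T w v :: u').

Definition hurwitz_equiv (T : TwistAction) : list T -> list T -> Prop :=
  clos_refl_trans (list T) (hurwitz_step T).

(* Geometric hypotheses on a chain a_1, ..., a_k:
   a_i, a_{i+1} meet transversely once  ==> braid relations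
   a_i, a_j disjoint (|i-j| >= 2)        ==> t_{a_i}(a_j) = a_j. *)
Definition meet_once (T : TwistAction) (x y : T) : Prop :=
  tw T x (tw T y x) = y /\ tw T y (tw T x y) = x.

Definition disjoint_curves (T : TwistAction) (x y : T) : Prop :=
  tw T x y = y /\ tw T y x = x.

(* Main.v *)
Require Import Defs.
From Stdlib Require Import List Relations Arith Lia.
Import ListNotations.

Section S.
Variable T : TwistAction.
Notation E := (hurwitz_equiv T).

Lemma cong (p s l1 l2 : list T) : E l1 l2 -> E (p ++ l1 ++ s) (p ++ l2 ++ s).
Proof.
  induction 1.
  - apply rt_step. destruct H.
    + replace (p ++ (u ++ v :: w :: u') ++ s) with ((p ++ u) ++ v :: w :: (u' ++ s))
        by (rewrite <- !app_assoc; reflexivity).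
      replace (p ++ (u ++ tw T v w :: v :: u') ++ s) with ((p ++ u) ++ tw T v w :: v :: (u' ++ s))
        by (rewrite <- !app_assoc; reflexivity).
      constructor.
    + replace (p ++ (u ++ v :: w :: u') ++ s) with ((p ++ u) ++ v :: w :: (u' ++ s))
        by (rewrite <- !app_assoc; reflexivity).
      replace (p ++ (u ++ w :: twinv T w v :: u') ++ s) with ((p ++ u) ++ w :: twinv T w v :: (u' ++ s))
        by (rewrite <- !app_assoc; reflexivity).
      constructor.
  - apply rt_refl.
  - eapply rt_trans; eauto.
Qed.

Lemma congl (p l1 l2 : list T) : E l1 l2 -> E (p ++ l1) (p ++ l2).
Proof. intro H. pose proof (cong p [] _ _ H). rewrite !app_nil_r in H0. exact H0. Qed.

Lemma congr (s l1 l2 : list T) : E l1 l2 -> E (l1 ++ s) (l2 ++ s).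
Proof. intro H. exact (cong [] s _ _ H). Qed.

Lemma stepR u u' (v w : T) : E (u ++ v :: w :: u') (u ++ tw T v w :: v :: u').
Proof. apply rt_step. constructor. Qed.

Lemma stepL u u' (v w : T) : E (u ++ v :: w :: u') (u ++ w :: twinv T w v :: u').
Proof. apply rt_step. constructor. Qed.

Lemma braid (x y : T) : meet_once T x y -> E [x; y; x] [y; x; y].
Proof.
  intros [H1 H2]. eapply rt_trans.
  - apply (stepR [x] [] y x).
  - simpl. pose proof (stepR [] [y] x (tw T y x)). simpl in H. rewrite H1 in H. exact H.
Qed.

Lemma repeat_snoc (z : T) n : repeat z n ++ [z] = repeat z (S n).
Proof. induction n; simpl; [reflexivity| rewrite IHn; reflexivity]. Qed.

Lemma Llem (x y : T) : meet_once T x y -> forall n,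
  E (repeat x n ++ [y; x]) (tw T y x :: repeat y (S n)).
Proof.
  intros Hm n. induction n.
  - simpl. apply (stepR [] [] y x).
  - eapply rt_trans.
    { replace (repeat x (S n) ++ [y; x]) with (repeat x n ++ [x; y; x] ++ [])
        by (rewrite app_nil_r; change [x;y;x] with ([x] ++ [y;x]); rewrite app_assoc, repeat_snoc; reflexivity).
      apply cong. apply braid. exact Hm. }
    replace (repeat x n ++ [y; x; y] ++ []) with ((repeat x n ++ [y; x]) ++ [y])
      by (rewrite <- !app_assoc; reflexivity).
    replace (tw T y x :: repeat y (S (S n))) with ((tw T y x :: repeat y (S n)) ++ [y])
      by (simpl; rewrite (repeat_snoc y n); reflexivity).
    apply congr. exact IHn.
Qed.

Lemma Mlem (x y : T) : meet_once T x y -> forall n,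
  E (x :: y :: repeat x n) (repeat y (S n) ++ [twinv T y x]).
Proof.
  intros Hm n. induction n.
  - simpl. apply (stepL [] [] x y).
  - eapply rt_trans.
    { change (x :: y :: repeat x (S n)) with ([] ++ [x; y; x] ++ repeat x n).
      apply cong. apply braid. exact Hm. }
    change ([] ++ [y; x; y] ++ repeat x n) with ([y] ++ (x :: y :: repeat x n)).
    change (repeat y (S (S n)) ++ [twinv T y x]) with ([y] ++ (repeat y (S n) ++ [twinv T y x])).
    apply congl. exact IHn.
Qed.

Lemma CR (v : T) u : (forall z, In z u -> tw T v z = z) -> E (v :: u) (u ++ [v]).
Proof.
  induction u as [|z u IH]; intros H.
  - apply rt_refl.
  - eapply rt_trans.
    + apply (stepR [] u v z).
    + simpl. rewrite (H z (or_introl eq_refl)).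
      apply (congl [z]). apply IH. intros; apply H; right; auto.
Qed.

Lemma CL (v : T) u : (forall z, In z u -> twinv T v z = z) -> E (u ++ [v]) (v :: u).
Proof.
  induction u as [|z u IH]; intros H.
  - apply rt_refl.
  - eapply rt_trans.
    + simpl. apply (congl [z]). apply IH. intros; apply H; right; auto.
    + pose proof (stepL [] u z v). simpl in H0. rewrite (H z (or_introl eq_refl)) in H0.
      exact H0.
Qed.

End S.

Lemma main (T : TwistAction) (a : nat -> T) (n : nat) :
  (forall i, 1 <= i -> i + 1 <= S n -> meet_once T (a i) (a (i + 1))) ->
  (forall i j, 1 <= i <= S n -> 1 <= j <= S n -> i + 2 <= j ->
     disjoint_curves T (a i) (a j)) ->
  hurwitz_equiv T
    (rev (map a (seq 1 (S n - 1))) ++ rev (map a (seq 1 (S n))))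
    (repeat (a (S n)) (S n) ++ rev (map (fun i => twinv T (a (i + 1)) (a i)) (seq 1 (S n - 1))))
  /\
  hurwitz_equiv T
    (map a (seq 1 (S n)) ++ map a (seq 1 (S n - 1)))
    (map (fun i => tw T (a (i + 1)) (a i)) (seq 1 (S n - 1)) ++ repeat (a (S n)) (S n)).
Proof.
  induction n; intros hadj hdisj.
  - simpl. split; apply rt_refl.
  - destruct IHn as [IHa IHb].
    { intros; apply hadj; lia. }
    { intros; apply hdisj; lia. }
    replace (S (S n) - 1) with (S n) by lia.
    replace (S n - 1) with n in IHa, IHb by lia.
    assert (Hm : meet_once T (a (S n)) (a (S (S n)))).
    { replace (S (S n)) with (S n + 1) by lia. apply hadj; lia. }
    assert (Hd : forall z, In z (map a (seq 1 n)) -> tw T (a (S (S n))) z = z).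
    { intros z Hz. apply in_map_iff in Hz. destruct Hz as [j [<- Hj]].
      apply in_seq in Hj. apply (hdisj j (S (S n))); lia. }
    rewrite !seq_S. rewrite !map_app. simpl.
    replace (1 + n) with (S n) by lia. replace (S (n + 1)) with (S (S n)) by lia.
    replace (S n + 1) with (S (S n)) by lia.
    rewrite seq_S in IHa, IHb. rewrite map_app in IHa, IHb. simpl in IHa, IHb.
    replace (1 + n) with (S n) in IHa, IHb by lia.
    split.
    + rewrite !rev_app_distr. simpl.
      eapply rt_trans.
      { replace (a (S n) :: rev (map a (seq 1 n)) ++ a (S (S n)) :: a (S n) :: rev (map a (seq 1 n)))
          with ([a (S n)] ++ (rev (map a (seq 1 n)) ++ [a (S (S n))]) ++ (a (S n) :: rev (map a (seq 1 n))))
          by (rewrite <- !app_assoc; reflexivity).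
        apply cong. apply CL. intros z Hz. rewrite <- in_rev in Hz.
        pose proof (twinv_tw T (a (S (S n))) z) as Ez. rewrite (Hd z Hz) in Ez. exact Ez. }
      rewrite rev_app_distr in IHa. simpl in IHa.
      change ([a (S n)] ++ (a (S (S n)) :: rev (map a (seq 1 n))) ++ a (S n) :: rev (map a (seq 1 n)))
        with ([a (S n); a (S (S n))] ++ (rev (map a (seq 1 n)) ++ a (S n) :: rev (map a (seq 1 n)))).
      eapply rt_trans.
      { apply congl. exact IHa. }
      pose proof (congr T (rev (map (fun i : nat => twinv T (a (i + 1)) (a i)) (seq 1 n))) _ _ (Mlem T _ _ Hm (S n))) as HM. simpl in HM. rewrite <- app_assoc in HM. simpl in HM. exact HM.
    + set (LA := map a (seq 1 n)) in *. set (xx := a (S n)) in *. set (yy := a (S (S n))) in *.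
      set (LB := map (fun i : nat => tw T (a (i + 1)) (a i)) (seq 1 n)) in *.
      eapply rt_trans.
      { replace (((LA ++ [xx]) ++ [yy]) ++ LA ++ [xx])
          with ((LA ++ [xx]) ++ (yy :: LA) ++ [xx])
          by (rewrite <- !app_assoc; reflexivity).
        apply (cong T (LA ++ [xx]) [xx] (yy :: LA) (LA ++ [yy])). apply CR. exact Hd. }
      replace ((LA ++ [xx]) ++ (LA ++ [yy]) ++ [xx])
        with (((LA ++ [xx]) ++ LA) ++ [yy; xx])
        by (rewrite <- !app_assoc; reflexivity).
      eapply rt_trans.
      { apply congr. exact IHb. }
      rewrite <- !app_assoc. apply congl. simpl.
      apply (Llem T _ _ Hm (S n)).
Qed.

Theorem lemma3p3 (T : TwistAction) (k : nat) (a : nat -> T)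
  (hk : 2 <= k)
  (hadj : forall i, 1 <= i -> i + 1 <= k -> meet_once T (a i) (a (i + 1)))
  (hdisj : forall i j, 1 <= i <= k -> 1 <= j <= k -> i + 2 <= j ->
     disjoint_curves T (a i) (a j)) :
  hurwitz_equiv T
    (rev (map a (seq 1 (k - 1))) ++ rev (map a (seq 1 k)))
    (repeat (a k) k ++ rev (map (fun i => twinv T (a (i + 1)) (a i)) (seq 1 (k - 1))))
  /\
  hurwitz_equiv T
    (map a (seq 1 k) ++ map a (seq 1 (k - 1)))
    (map (fun i => tw T (a (i + 1)) (a i)) (seq 1 (k - 1)) ++ repeat (a k) k).
Proof.
  destruct k as [|n]; [lia|].
  apply main; assumption.
Qed.
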